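(* Let $G=(V,E)$ be an undirected graph (not necessarily locally finite), let $X\subset V$ with $\mathrm{width}(X)<+\infty$, let $Y=V\setminus X$, and let $f\in L^\infty(X)$ and $g\in L^\infty(Y)$ be bounded real-valued functions. Then the Dirichlet problem \[ \begin{cases}\Delta_\infty u(x)=f(x), & x\in X,\\ u(x)=g(x), & x\in Y,\end{cases} \] admits a bounded solution $u:V\to\mathbb{R}$. Moreover, if $f\ge 0$ on $X$ or $f\le 0$ on $X$, then this bounded solution is unique (i.e. any two bounded solutions coincide).
   Context: For $x,y\in V$ write $x\sim y$ if $\{x,y\}\in E$. The combinatorial distance $d(A,B)$ between subsets $A,B\subset V$ is the infimum of the lengths $n$ of paths $A\ni x_0\sim x_1\sim\cdots\sim x_n\in B$ (and $d(A,x)=d(A,\{x\})$). The boundary of $X$ is $\partial X=\{y\notin X:\ y\sim x \text{ for some } x\in X\}$, and $\mathrm{width}(X)=\sup_{x\in X} d(\partial X,x)$. For $u:V\to\mathbb{R}$ the discrete infinity Laplacian is $\Delta_\infty u(x)=\inf_{y\sim x}u(y)+\sup_{y\sim x}u(y)-2u(x)$. *)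

(* Defs.v *)
From HB Require Import structures.
From mathcomp Require Import all_boot all_order all_algebra.
From mathcomp Require Import all_classical all_reals ereal.
Set Implicit Arguments. Unset Strict Implicit. Unset Printing Implicit Defensive.
Import Order.TTheory GRing.Theory Num.Theory.
Local Open Scope classical_set_scope.
Local Open Scope ring_scope.

Section GraphDefs.
Variable V : Type.
Variable adj : V -> V -> Prop.

Inductive walk : nat -> V -> V -> Prop :=
| walk0 a : walk 0 a a
| walkS n a b c : walk n a b -> adj b c -> walk n.+1 a c.

(* combinatorial distance d(A,B) in \bar R (+oo if no path) *)
Definition gdist (R : realType) (A B : set V) : \bar R :=
  ereal_inf [set (n%:R)%:E | n in [set n : nat | exists a b, A a /\ B b /\ walk n a b]].

Definition bdry (X : set V) : set V :=
  [set y | ~ X y /\ exists x, X x /\ adj y x].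

Definition width (R : realType) (X : set V) : \bar R :=
  ereal_sup [set @gdist R (bdry X) [set x] | x in X].

Definition inf_lap (R : realType) (u : V -> R) (x : V) : R :=
  inf [set u y | y in adj x] + sup [set u y | y in adj x] - 2 * u x.

Definition bounded_on (R : realType) (u : V -> R) (A : set V) : Prop :=
  exists M : R, forall x, A x -> `|u x| <= M.

Definition dirichlet_sol (R : realType) (X : set V) (f g u : V -> R) : Prop :=
  (forall x, X x -> inf_lap u x = f x) /\ (forall x, ~ X x -> u x = g x).
End GraphDefs.

(* Main.v *)
Require Import Defs.
From HB Require Import structures.
From mathcomp Require Import all_boot all_order all_algebra.
From mathcomp Require Import all_classical all_reals ereal.
From mathcomp Require Import ring lra zify.
Import Order.TTheory GRing.Theory Num.Theory.
Local Open Scope classical_set_scope.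
Local Open Scope ring_scope.

Section SupInf.
Variables (R : realType) (T : Type).
Implicit Types (A : set T) (h : T -> R).

Lemma supU A h C : (forall y, A y -> h y <= C) -> forall y, A y -> h y <= sup (h @` A).
Proof.
move=> hC y Ay; apply: ub_le_sup; last by exists y.
by exists C => _ [z Az <-]; apply: hC.
Qed.

Lemma supL A h c : (exists y, A y) -> (forall y, A y -> h y <= c) -> sup (h @` A) <= c.
Proof.
move=> [y0 Ay0] hc; apply: ge_sup; first by exists (h y0), y0.
by move=> _ [z Az <-]; apply: hc.
Qed.

Lemma supA A h C eps : (exists y, A y) -> (forall y, A y -> h y <= C) -> 0 < eps ->
  exists y, A y /\ sup (h @` A) - eps < h y.
Proof.
move=> [y0 Ay0] hC he.
have hs : has_sup (h @` A).
  split; first by exists (h y0), y0.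
  by exists C => _ [z Az <-]; apply: hC.
have [_ [y Ay <-] hy] := sup_adherent he hs.
by exists y.
Qed.

Lemma infL A h C : (forall y, A y -> C <= h y) -> forall y, A y -> inf (h @` A) <= h y.
Proof.
move=> hC y Ay; apply: ge_inf; last by exists y.
by exists C => _ [z Az <-]; apply: hC.
Qed.

Lemma infU A h c : (exists y, A y) -> (forall y, A y -> c <= h y) -> c <= inf (h @` A).
Proof.
move=> [y0 Ay0] hc; apply: lb_le_inf; first by exists (h y0), y0.
by move=> _ [z Az <-]; apply: hc.
Qed.

Lemma infA A h C eps : (exists y, A y) -> (forall y, A y -> C <= h y) -> 0 < eps ->
  exists y, A y /\ h y < inf (h @` A) + eps.
Proof.
move=> [y0 Ay0] hC he.
have hs : has_inf (h @` A).
  split; first by exists (h y0), y0.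
  by exists C => _ [z Az <-]; apply: hC.
have [_ [y Ay <-] hy] := inf_adherent he hs.
by exists y.
Qed.
End SupInf.
Section Uniq.
Set Implicit Arguments. Unset Strict Implicit.
Variables (R : realType) (V : Type) (adj : V -> V -> Prop).
Hypothesis adj_sym : forall x y, adj x y -> adj y x.
Variables (X : set V) (f : V -> R) (u v : V -> R) (B : R).
Hypothesis hu : forall x, `|u x| <= B.
Hypothesis hv : forall x, `|v x| <= B.
Hypothesis hf : forall x, X x -> 0 <= f x.
Hypothesis equ : forall x, X x -> inf_lap adj u x = f x.
Hypothesis eqv : forall x, X x -> inf_lap adj v x = f x.
Hypothesis uvY : forall x, ~ X x -> u x = v x.
Hypothesis nbr : forall x, X x -> exists y, adj x y.

Let NI (h : V -> R) x := inf [set h y | y in adj x].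
Let NS (h : V -> R) x := sup [set h y | y in adj x].

Lemma uub x : u x <= B. Proof. by have := hu x; rewrite ler_norml => /andP[]. Qed.
Lemma ulb x : - B <= u x. Proof. by have := hu x; rewrite ler_norml => /andP[]. Qed.
Lemma vub x : v x <= B. Proof. by have := hv x; rewrite ler_norml => /andP[]. Qed.
Lemma vlb x : - B <= v x. Proof. by have := hv x; rewrite ler_norml => /andP[]. Qed.

Lemma NSu_ub x y : adj x y -> u y <= NS u x.
Proof. by apply: (@supU _ _ _ _ B) => z _; apply: uub. Qed.
Lemma NSv_ub x y : adj x y -> v y <= NS v x.
Proof. by apply: (@supU _ _ _ _ B) => z _; apply: vub. Qed.
Lemma NIu_lb x y : adj x y -> NI u x <= u y.
Proof. by apply: (@infL _ _ _ _ (- B)) => z _; apply: ulb. Qed.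
Lemma NIv_lb x y : adj x y -> NI v x <= v y.
Proof. by apply: (@infL _ _ _ _ (- B)) => z _; apply: vlb. Qed.

Lemma equ' x : X x -> NI u x + NS u x - 2 * u x = f x.
Proof. exact: equ. Qed.
Lemma eqv' x : X x -> NI v x + NS v x - 2 * v x = f x.
Proof. exact: eqv. Qed.

Let w x := u x - v x.
Variables (d : V -> nat) (N : nat).
Hypothesis hdN : forall x, X x -> (d x <= N)%N.
Hypothesis hd2 : forall x, X x -> exists y, adj x y /\ (~ X y \/ (d y < d x)%N).
Section WithM.
Variable M : R.
Hypothesis wM : forall x, w x <= M.

Lemma wY x : ~ X x -> w x = 0.
Proof. by move=> nx; rewrite /w uvY // subrr. Qed.

Lemma L1 x : X x -> NI u x - NI v x <= M.
Proof.
move=> Xx; have hn := nbr Xx.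
suff : NI u x - M <= NI v x by lra.
apply: infU => // y axy.
have := NIu_lb axy; have := wM y; rewrite /w; lra.
Qed.

Lemma L2 x : X x -> NS u x - NS v x <= M.
Proof.
move=> Xx; have hn := nbr Xx.
suff : NS u x <= NS v x + M by lra.
apply: supL => // y axy.
have := NSv_ub axy; have := wM y; rewrite /w; lra.
Qed.

Lemma zstep x g e : X x -> M - g < w x -> 0 < e ->
  exists z, adj x z /\ NS u x - e < u z /\ M - 2 * g - e < w z.
Proof.
move=> Xx hw he.
have [z [axz hz]] := @supA _ _ _ _ B _ (nbr Xx) (fun y _ => uub y) he.
exists z; split => //; split => //.
have := L1 Xx; have := equ' Xx; have := eqv' Xx; have := NSv_ub axz.
move: hw; rewrite /w /NI /NS; lra.
Qed.

Lemma sigma_mono x z : X z -> adj x z -> u z - u x <= NS u z - u z.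
Proof.
move=> Xz axz.
have := NIu_lb (adj_sym axz); have := equ' Xz; have := hf Xz; lra.
Qed.

Lemma inX x : 0 < w x -> X x.
Proof. by move=> hw; apply: contrapT => nx; move: hw; rewrite wY // ltxx. Qed.

Lemma chain (K : nat) : forall g x, 0 < g -> (3%:R ^+ K) * g <= M -> M - g < w x ->
  u x + K%:R * (NS u x - u x) <= B + K%:R * ((3%:R ^+ K) * g).
Proof.
elim: K => [|K IH] g x hg h3 hw.
  by rewrite !mul0r !addr0 uub.
have p1 : 1 <= (3%:R : R) ^+ K by apply: exprn_ege1; lra.
move: h3; rewrite exprSr => h3.
have Xx : X x by apply: inX; nra.
have [z [axz [hz1 hz2]]] := zstep Xx hw hg.
have hz2' : M - 3 * g < w z by lra.
have := IH (3 * g) z ltac:(lra) ltac:(nra) hz2'.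
have Xz : X z by apply: inX; nra.
have := sigma_mono Xz axz.
set k := K%:R; set p := 3%:R ^+ K.
have k0 : 0 <= k by rewrite /k ler0n.
rewrite -/(NS u z) -/(NS u x) => hs hIH.
rewrite -natr1 -/k.
have hk : k + 1 <= p * 3.
  rewrite /k /p natr1 -exprSr -natrX ler_nat; exact: ltnW (ltn_expl _ _).
have hkg : (k + 1) * g <= p * 3 * g by apply: ler_wpM2r => //; lra.
have : k * (NS u x - u x - g) <= k * (NS u z - u z).
  apply: ler_wpM2l => //; lra.
move: hIH hkg; rewrite ?mulrDl ?mulrDr ?mulrBr ?mul1r; nra.
Qed.


Lemma flat x g s : X x -> M - g < w x -> NS u x - u x <= s ->
  forall y, adj x y -> M - 2 * g - 4 * s < w y.
Proof.
move=> Xx hw hs y axy.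
have := NIu_lb axy; have := NSu_ub axy; have := NSv_ub axy.
have := L1 Xx; have := equ' Xx; have := eqv' Xx; have := hf Xx.
move: hw hs; rewrite /w /NI /NS; lra.
Qed.

Lemma Sk k : 0 < M -> exists g, 0 < g /\ g <= M /\
  forall x, M - g < w x -> X x /\ (k <= d x)%N.
Proof.
move=> M0; elim: k => [|k [g [g0 [gM IH]]]].
  exists M; split => //; split => // x hx; split => //; apply: inX; lra.
set K := (Num.truncn (32 * B / g)).+1.
set p : R := 3%:R ^+ K.
have p1 : 1 <= p by apply: exprn_ege1; lra.
have hK : 32 * B / g < K%:R by apply: truncnS_gt.
have hKg : 32 * B < K%:R * g.
  by move: hK; rewrite ltr_pdivrMr.
set g' := g / (16 * p).
have g'0 : 0 < g' by apply: divr_gt0 => //; nra.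
have hpg : p * g' = g / 16.
  have pn0 : p != 0 by rewrite gt_eqF //; lra.
  rewrite /g'; field. by rewrite pn0.
have g'g : g' <= g / 16 by rewrite -hpg; nra.
exists g'; split => //; split; first lra.
move=> x hx.
have [Xx hkx] := IH x ltac:(lra).
split => //.
rewrite ltn_neqAle hkx andbT; apply/negP => /eqP ekx.
have hpM : p * g' <= M by lra.
have hc := @chain K g' x g'0 hpM hx.
have B0 : 0 <= B by apply: le_trans (hu x).
have := ulb x.
set sig := NS u x - u x.
move: hc; rewrite -/sig hpg => hc hul.
have k0 : 0 < K%:R :> R by rewrite ltr0n.
have hsig : sig < g / 8.
  rewrite -(ltr_pM2l k0); nra.
have [y [axy hy]] := hd2 Xx.
have hwy := flat Xx hx (ltW hsig) axy.
have [Xy hky] := IH y ltac:(lra).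
case: hy => [//|]; rewrite -ekx => hlt.
by move: hky; rewrite leqNgt hlt.
Qed.

End WithM.

Lemma uniq_le : forall x, u x <= v x.
Proof.
move=> x0; rewrite leNgt; apply/negP => h.
set M := sup [set w y | y in setT].
have wB : forall y, setT y -> w y <= B + B.
  by move=> y _; have := uub y; have := vlb y; rewrite /w; lra.
have wM : forall y, w y <= M by move=> y; apply: (@supU _ _ _ _ (B + B)).
have M0 : 0 < M by have := wM x0; rewrite /w; lra.
have [g [g0 [gM H]]] := Sk wM N.+1 M0.
have [y [_ hy]] := @supA _ _ setT w (B + B) g (ex_intro _ x0 I) wB g0.
have [Xy hNy] := H y hy.
by have := hdN Xy; rewrite leqNgt hNy.
Qed.
End Uniq.
Section Exist.
Set Implicit Arguments. Unset Strict Implicit.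
Variables (R : realType) (V : Type) (adj : V -> V -> Prop).
Variables (X : set V) (f g : V -> R) (F G : R).
Hypothesis F0 : 0 <= F.
Hypothesis G0 : 0 <= G.
Hypothesis hfF : forall x, X x -> `|f x| <= F.
Hypothesis hgG : forall x, ~ X x -> `|g x| <= G.
Variables (d : V -> nat) (N : nat).
Hypothesis hd1 : forall x, X x -> (0 < d x)%N.
Hypothesis hdN : forall x, X x -> (d x <= N)%N.
Hypothesis hd2 : forall x, X x -> exists y, adj x y /\ (~ X y \/ (d y < d x)%N).
Hypothesis hd3 : forall x y, X x -> adj x y -> X y -> (d y <= (d x).+1)%N.

Let NI (h : V -> R) x := inf [set h y | y in adj x].
Let NS (h : V -> R) x := sup [set h y | y in adj x].

Definition Top (h : V -> R) x :=
  if `[< X x >] then (NI h x + NS h x - f x) / 2 else g x.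

Lemma nbrE x : X x -> exists y, adj x y.
Proof. by move=> /hd2 [y [? _]]; exists y. Qed.

Lemma Top_mono (h1 h2 : V -> R) C :
  (forall y, - C <= h1 y <= C) -> (forall y, - C <= h2 y <= C) ->
  (forall y, h1 y <= h2 y) -> forall x, Top h1 x <= Top h2 x.
Proof.
move=> b1 b2 h12 x; rewrite /Top; case: ifPn => // /asboolP Xx.
have hn := nbrE Xx.
have e1 : NI h1 x <= NI h2 x.
  apply: infU => // y axy.
  apply: le_trans (h12 y).
  by apply: (@infL _ _ _ _ (- C)) => // z _; case/andP: (b1 z).
have e2 : NS h1 x <= NS h2 x.
  apply: supL => // y axy.
  apply: le_trans (h12 y) _.
  by apply: (@supU _ _ _ _ C) => // z _; case/andP: (b2 z).
rewrite ler_pM2r; last by [].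
by apply: lerB => //; apply: lerD.
Qed.


Definition psi (j : nat) : R :=
  G + F / 2 * (j%:R * (2 * (N.+1)%:R - j%:R)).

Lemma psi_mono i j : (i <= j)%N -> (j <= N.+1)%N -> psi i <= psi j.
Proof.
move=> hij hjN.
have ri : (i%:R : R) <= j%:R by rewrite ler_nat.
have rj : (j%:R : R) <= (N.+1)%:R by rewrite ler_nat.
have ri0 : (0 : R) <= i%:R by rewrite ler0n.
rewrite /psi lerD2l.
have -> : F / 2 * (j%:R * (2 * (N.+1)%:R - j%:R)) =
  F / 2 * (i%:R * (2 * (N.+1)%:R - i%:R)) + F / 2 * ((j%:R - i%:R) * (2 * (N.+1)%:R - i%:R - j%:R)) by ring.
rewrite lerDl; apply: mulr_ge0; first by apply: divr_ge0.

apply: mulr_ge0; lra.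
Qed.

Lemma psi2 k : psi k + psi k.+2 - 2 * psi k.+1 = - F.
Proof.
rewrite /psi -[k.+2]addn2 -[k.+1]addn1 !natrD; by field.
Qed.

Lemma psi0 : psi 0 = G.
Proof. by rewrite /psi mul0r mulr0 addr0. Qed.

Definition dd x := if `[< X x >] then d x else 0%N.
Definition Usup x := psi (dd x).
Definition Lsub x := - Usup x.

Lemma ddX x : X x -> dd x = d x.
Proof. by move=> Xx; rewrite /dd asboolT. Qed.
Lemma ddnX x : ~ X x -> dd x = 0%N.
Proof. by move=> Xx; rewrite /dd asboolF. Qed.
Lemma ddN x : (dd x <= N)%N.
Proof. by rewrite /dd; case: ifPn => // /asboolP /hdN. Qed.

Lemma U_bnd x : G <= Usup x <= psi N.
Proof.
apply/andP; split.
  by rewrite -psi0; apply: psi_mono => //; apply: leq_trans (ddN x) _.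
by apply: psi_mono => //; apply: ddN.
Qed.

Lemma dd_nbr x y : X x -> adj x y -> (dd y <= (d x).+1)%N.
Proof.
move=> Xx axy; rewrite /dd; case: ifPn => // /asboolP Xy.
exact: hd3.
Qed.

Lemma dd_down x : X x -> exists y, adj x y /\ (dd y < d x)%N.
Proof.
move=> Xx; have [y [axy hy]] := hd2 Xx; exists y; split => //.
case: hy => [nXy|lt]; first by rewrite ddnX // hd1.
by rewrite /dd; case: ifPn => _ //; rewrite hd1.
Qed.

Lemma super x : Top Usup x <= Usup x.
Proof.
rewrite /Top; case: ifPn => [/asboolP Xx|/asboolP nXx].
  have hn := nbrE Xx.
  have [y0 [ay0 hy0]] := dd_down Xx.
  have hx := hd1 Xx; have hxN := hdN Xx.
  have [k ek] : exists k, d x = k.+1 by move: hx; case: (d x) => // k _; exists k.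
  rewrite /Usup (ddX Xx) ek; rewrite ek in hy0 hxN.
  have e1 : NI Usup x <= psi k.
    have hI := @infL _ _ (adj x) Usup G (fun z _ => proj1 (andP (U_bnd z))) y0 ay0.
    apply: le_trans hI _.
    by apply: psi_mono => //; lia.
  have e2 : NS Usup x <= psi k.+2.
    apply: supL => // y axy; apply: psi_mono; last lia.
    by have := dd_nbr Xx axy; rewrite ek.
  have := psi2 k; have := hfF Xx; rewrite ler_norml => /andP [hf1 hf2].
  rewrite /NI /NS in e1 e2 *; lra.
rewrite /Usup ddnX // psi0.
by have := hgG nXx; rewrite ler_norml => /andP [].
Qed.

Lemma sub x : Lsub x <= Top Lsub x.
Proof.
rewrite /Top; case: ifPn => [/asboolP Xx|/asboolP nXx].
  have hn := nbrE Xx.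
  have [y0 [ay0 hy0]] := dd_down Xx.
  have hx := hd1 Xx; have hxN := hdN Xx.
  have [k ek] : exists k, d x = k.+1 by move: hx; case: (d x) => // k _; exists k.
  rewrite /Lsub /Usup (ddX Xx) ek; rewrite ek in hy0 hxN.
  have e1 : - psi k <= NS Lsub x.
    have hS := @supU _ _ (adj x) Lsub (- G)
      (fun z _ => ltac:(rewrite /Lsub lerN2; exact: (proj1 (andP (U_bnd z))))) y0 ay0.
    apply: le_trans _ hS.
    by rewrite /Lsub lerN2; apply: psi_mono => //; lia.
  have e2 : - psi k.+2 <= NI Lsub x.
    apply: infU => // y axy; rewrite /Lsub lerN2; apply: psi_mono; last lia.
    by have := dd_nbr Xx axy; rewrite ek.
  have := psi2 k; have := hfF Xx; rewrite ler_norml => /andP [hf1 hf2].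
  rewrite /NI /NS in e1 e2 *; lra.
rewrite /Lsub /Usup ddnX // psi0.
by have := hgG nXx; rewrite ler_norml => /andP [].
Qed.


Definition Fam (h : V -> R) :=
  (forall x, Lsub x <= h x <= Usup x) /\ (forall x, h x <= Top h x).
Definition usol x := sup [set h x | h in Fam].

Lemma bnd_of (h : V -> R) : (forall x, Lsub x <= h x <= Usup x) ->
  forall x, - psi N <= h x <= psi N.
Proof.
move=> hb x; have := hb x; have := U_bnd x; rewrite /Lsub.
move=> /andP [a b] /andP [c e]; apply/andP; split; lra.
Qed.

Lemma L_Fam : Fam Lsub.
Proof.
split; last exact: sub.
move=> x; rewrite lexx /=; have := U_bnd x; rewrite /Lsub => /andP [a b]; have := G0; lra.
Qed.

Lemma usol_ge h x : Fam h -> h x <= usol x.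
Proof.
move=> hF; apply: (@supU _ _ Fam (fun h => h x) (psi N)) => // k [kb _].
by case/andP: (bnd_of kb x).
Qed.

Lemma usol_le x : usol x <= Usup x.
Proof.
by apply: supL; [exists Lsub; exact: L_Fam | move=> h [hb _]; case/andP: (hb x)].
Qed.

Lemma usol_bnd x : Lsub x <= usol x <= Usup x.
Proof. by rewrite usol_le andbT; apply: usol_ge L_Fam. Qed.

Lemma Cbnd_U x : - psi N <= Usup x <= psi N.
Proof. by have := U_bnd x; move/andP => [a b]; have g0 := G0; apply/andP; split; lra. Qed.
Lemma Cbnd_L x : - psi N <= Lsub x <= psi N.
Proof. by have := Cbnd_U x; rewrite /Lsub; move/andP => [a b]; apply/andP; split; lra. Qed.

Lemma usol_sub x : usol x <= Top usol x.
Proof.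
apply: supL; first by exists Lsub; exact: L_Fam.
move=> h [hb hT]; apply: le_trans (hT x) _.
apply: (@Top_mono _ _ (psi N)); first exact: bnd_of.
  exact: (bnd_of usol_bnd).
by move=> y; apply: usol_ge.
Qed.

Lemma Tu_bnd x : Lsub x <= Top usol x <= Usup x.
Proof.
apply/andP; split.
  apply: le_trans (sub x) _; apply: (@Top_mono _ _ (psi N)).
  - exact: Cbnd_L.
  - exact: (bnd_of usol_bnd).
  - by move=> y; case/andP: (usol_bnd y).
apply: le_trans _ (super x); apply: (@Top_mono _ _ (psi N)).
- exact: (bnd_of usol_bnd).
- exact: Cbnd_U.
- by move=> y; case/andP: (usol_bnd y).
Qed.

Lemma Tu_Fam : Fam (Top usol).
Proof.
split; first exact: Tu_bnd.
move=> x; apply: (@Top_mono _ _ (psi N)).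
- exact: (bnd_of usol_bnd).
- exact: (bnd_of Tu_bnd).
- exact: usol_sub.
Qed.

Lemma usol_fix x : usol x = Top usol x.
Proof.
apply/eqP; rewrite eq_le usol_sub /=.
exact: usol_ge Tu_Fam.
Qed.

End Exist.
Section Dist.
Set Implicit Arguments. Unset Strict Implicit.
Variables (V : Type) (adj : V -> V -> Prop).
Hypothesis adj_sym : forall x y, adj x y -> adj y x.
Variables (X : set V) (N : nat).
Hypothesis hN : forall x, X x -> exists n, (n <= N)%N /\ exists a, ~ X a /\ walk adj n a x.

Definition Ew j x := exists a, ~ X a /\ walk adj j a x.

Lemma Pd_ex x : exists j, `[< Ew j x >] || (j == N).
Proof. by exists N; rewrite eqxx orbT. Qed.

Definition dist x := ex_minn (Pd_ex x).

Lemma dist_min j x : Ew j x -> (dist x <= j)%N.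
Proof.
by move=> h; rewrite /dist; case: ex_minnP => m _ hm; apply: hm; rewrite (asboolT h).
Qed.

Lemma distN x : (dist x <= N)%N.
Proof. by rewrite /dist; case: ex_minnP => m _ hm; apply: hm; rewrite eqxx orbT. Qed.

Lemma distE x : X x -> Ew (dist x) x.
Proof.
move=> Xx; have [n [hn hE]] := hN Xx.
have hm := dist_min hE.
move: hm; rewrite /dist; case: ex_minnP => m Pm _ hm.
case/orP: Pm => [/asboolP //|/eqP em].
have -> : m = n by apply/eqP; rewrite eqn_leq hm em hn.
exact: hE.
Qed.

Lemma dist1 x : X x -> (0 < dist x)%N.
Proof.
move=> Xx; have := distE Xx; case: (dist x) => // -[a [nXa hw]].
by inversion hw; subst.
Qed.

Lemma dist2 x : X x -> exists y, adj x y /\ (~ X y \/ (dist y < dist x)%N).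
Proof.
move=> Xx; have := distE Xx; have := dist1 Xx.
case: (dist x) => // m _ [a [nXa hw]].
inversion hw; subst.
exists b; split; first exact: adj_sym.
have [Xb|nXb] := pselect (X b); last by left.
right; apply: dist_min; by exists a.
Qed.

Lemma dist3 x y : X x -> adj x y -> X y -> (dist y <= (dist x).+1)%N.
Proof.
move=> Xx axy Xy; apply: dist_min.
have [a [nXa hw]] := distE Xx.
by exists a; split => //; apply: walkS hw axy.
Qed.
End Dist.

Section W.
Variables (R : realType) (V : Type) (adj : V -> V -> Prop) (X : set V).

Lemma width_bound : (@width V adj R X < +oo)%E ->
  exists N : nat, forall x, X x -> exists n, (n <= N)%N /\ exists a, ~ X a /\ walk adj n a x.
Proof.
move=> hW.
have [r hr] : exists r : R, (@width V adj R X < r%:E)%E.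
  move: hW; case: (width adj R X) => [r0| |] hW.
  - by exists (r0 + 1); rewrite lte_fin ltrDl.
  - by [].
  - by exists 0; rewrite ltNyr.
exists (Num.truncn r).+1 => x Xx.
have : (gdist adj R (bdry adj X) [set x] < r%:E)%E.
  apply: (le_lt_trans _ hr); apply: ereal_sup_ubound; by exists x.
move=> /ereal_inf_lt [_ [n [a [b [ha [hb hw]]]]] <-].
rewrite lte_fin => hn.
exists n; split.
  have := truncnS_gt r => h.
  by apply: ltnW; rewrite -(ltr_nat R); apply: lt_trans h.
exists a; split; first by case: ha.
by move: hb => /= <-.
Qed.
End W.

Lemma inf_lapN (R : realType) (V : Type) (adj : V -> V -> Prop) (u : V -> R) x :
  inf_lap adj (fun y => - u y) x = - inf_lap adj u x.
Proof.
rewrite /inf_lap /inf.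
have e1 : [set - u y | y in adj x] = -%R @` [set u y | y in adj x].
  by apply/seteqP; split => _ [y ay <-]; [exists (u y) => //; exists y | case: ay => z az <-; exists z].
have e2 : -%R @` [set - u y | y in adj x] = [set u y | y in adj x].
  apply/seteqP; split => _ [y ay <-].
    by case: ay => z az <-; exists z => //; rewrite opprK.
  by exists (- u y); [exists y | rewrite opprK].
rewrite e2 e1; lra.
Qed.

Theorem theorem1p1 (R : realType) (V : Type) (adj : V -> V -> Prop)
  (adj_sym : forall x y, adj x y -> adj y x)
  (adj_irr : forall x, ~ adj x x)
  (X : set V) (f g : V -> R)
  (hX : (@width V adj R X < +oo)%E)
  (hf : bounded_on f X) (hg : bounded_on g (~` X)) :
  (exists u : V -> R, bounded_on u setT /\ dirichlet_sol adj X f g u) /\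
  ((forall x, X x -> 0 <= f x) \/ (forall x, X x -> f x <= 0) ->
   forall u v : V -> R,
     bounded_on u setT -> dirichlet_sol adj X f g u ->
     bounded_on v setT -> dirichlet_sol adj X f g v -> u = v).
Proof.
have [N hN] := width_bound hX.
set d := dist adj X N.
have hd1 : forall x, X x -> (0 < d x)%N by move=> x Xx; exact: (dist1 hN Xx).
have hdN : forall x, X x -> (d x <= N)%N by move=> x _; apply: distN.
have hd2 := dist2 adj_sym hN.
have hd3 : forall x y, X x -> adj x y -> X y -> (d y <= (d x).+1)%N.
  by move=> x y Xx axy Xy; exact: (dist3 hN Xx axy Xy).
have nbr : forall x, X x -> exists y, adj x y.
  by move=> x /hd2 [y [? _]]; exists y.
split.
  case: hf => Mf hMf; case: hg => Mg hMg.
  have F0 : 0 <= `|Mf| by [].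
  have G0 : 0 <= `|Mg| by [].
  have hfF : forall x, X x -> `|f x| <= `|Mf|.
    by move=> x Xx; apply: le_trans (hMf x Xx) (ler_norm _).
  have hgG : forall x, ~ X x -> `|g x| <= `|Mg|.
    by move=> x Xx; apply: le_trans (hMg x Xx) (ler_norm _).
  set u := usol adj X f g `|Mf| `|Mg| d N.
  exists u; split.
    exists (psi `|Mf| `|Mg| N N) => x _.
    have := bnd_of F0 hdN (usol_bnd F0 G0 hfF hgG hd1 hdN hd2 hd3) x.
    by rewrite ler_norml.
  have hfix := usol_fix F0 G0 hfF hgG hd1 hdN hd2 hd3.
  split => x hx; rewrite -/u in hfix; have := hfix x; rewrite /Top.
    by rewrite asboolT // /inf_lap => ->; lra.
  by rewrite asboolF.
move=> hsign.
suff key : forall (f g : V -> R) u v, (forall x, X x -> 0 <= f x) ->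
    bounded_on u setT -> dirichlet_sol adj X f g u ->
    bounded_on v setT -> dirichlet_sol adj X f g v -> forall x, u x <= v x.
  case: hsign => hs u v bu su bv sv.
    by apply: funext => x; apply/eqP; rewrite eq_le !(key f g) //.
  have hs' : forall x, X x -> 0 <= - f x by move=> x /hs; rewrite oppr_ge0.
  have bN : forall w : V -> R, bounded_on w setT -> bounded_on (fun x => - w x) setT.
    by move=> w [B hB]; exists B => x _; rewrite normrN; apply: hB.
  have sN : forall w, dirichlet_sol adj X f g w ->
      dirichlet_sol adj X (fun x => - f x) (fun x => - g x) (fun x => - w x).
    by move=> w [h1 h2]; split => x hx; [rewrite inf_lapN h1 | rewrite h2].
  apply: funext => x; apply/eqP; rewrite eq_le.
  have h1 := key _ _ _ _ hs' (bN _ bu) (sN _ su) (bN _ bv) (sN _ sv) x.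
  have h2 := key _ _ _ _ hs' (bN _ bv) (sN _ sv) (bN _ bu) (sN _ su) x.
  by move: h1 h2; rewrite !lerN2 => -> ->.
move=> f0 g0 u v hf0 [Bu hBu] [hu1 hu2] [Bv hBv] [hv1 hv2].
apply: (@uniq_le R V adj adj_sym X f0 u v (`|Bu| + `|Bv|)) => //.
- move=> x; apply: le_trans (hBu x I) _; have := normr_ge0 Bv; have := ler_norm Bu; lra.
- move=> x; apply: le_trans (hBv x I) _; have := normr_ge0 Bu; have := ler_norm Bv; lra.
- by move=> x hx; rewrite hu2 // hv2.
- exact: hdN.
- exact: hd2.
Qed.
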